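(* Let $k$ and $n$ be integers such that $k \geq 2$ and $n \geq 2k$, and let $(V,\mathcal{A}')$ be a partial $k$-star design of order $n$ with fewer than $u(n,k)$ stars. Then the leftover $L'$ of $(V,\mathcal{A}')$ contains a $k$-star.
   Context: A $k$-star is a copy of $K_{1,k}$. A partial $k$-star design of order $n$ is a pair $(V,\mathcal{A})$ where $V$ is a set of $n$ vertices and $\mathcal{A}$ is a set of edge-disjoint $k$-stars that are subgraphs of the complete graph $K_V$. The leftover of $(V,\mathcal{A})$ is the graph on vertex set $V$ whose edges are the edges of $K_V$ not lying in any star of $\mathcal{A}$. Here \[u(n,k)= \begin{cases} 2 \lfloor \frac{n-2}{k} \rfloor-1 & \text{if $n \not \equiv 1\pmod{k}$},\\ \frac{2(n-1)}{k} - 2 & \text{if $n \equiv 1\pmod{k}$.} \end{cases} \] *)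

(* Defs.v *)
From mathcomp Require Import all_boot.
Unset Printing Implicit Defensive.

(* Vertex set V = 'I_n (any n-set).
   A k-star K_{1,k} (k >= 1) is given by its centre c and its set S of k
   leaves, c \notin S; its edges are the pairs {c, x}, x in S. *)
Definition star (n : nat) := ('I_n * {set 'I_n})%type.

Definition is_kstar (n k : nat) (s : star n) : bool :=
  (s.1 \notin s.2) && (#|s.2| == k).

Definition star_edges (n : nat) (s : star n) : {set {set 'I_n}} :=
  [set [set s.1; x] | x in s.2].

Definition partial_star_design (n k : nat) (A : {set star n}) : Prop :=
  (forall s, s \in A -> is_kstar n k s) /\
  (forall s t, s \in A -> t \in A -> s != t ->
     [disjoint star_edges n s & star_edges n t]).

Definition leftover_edge (n : nat) (A : {set star n}) (e : {set 'I_n}) : bool :=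
  (#|e| == 2) && [forall s in A, e \notin star_edges n s].

Definition leftover_has_kstar (n k : nat) (A : {set star n}) : Prop :=
  exists s : star n, is_kstar n k s /\
    (forall e, e \in star_edges n s -> leftover_edge n A e).

Definition u (n k : nat) : nat :=
  if n %% k == 1 %% k then (2 * (n - 1)) %/ k - 2
  else 2 * ((n - 2) %/ k) - 1.

(* Main.v *)
Require Import Defs.
From mathcomp Require Import all_boot zify.

Lemma sub_card (T : finType) (N : {set T}) k : k <= #|N| ->
  exists S : {set T}, S \subset N /\ #|S| = k.
Proof.
move=> hk; exists [set x in take k (enum N)]; split.
  apply/subsetP=> x; rewrite inE => /mem_take; by rewrite mem_enum.
rewrite cardsE (card_uniqP _); last by apply: take_uniq; apply: enum_uniq.
by rewrite size_takel // -cardE.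
Qed.

Lemma u_bound k n : 2 <= k -> 2 * k <= n -> u n k <= n - k.
Proof.
move=> hk hn; rewrite /u.
have -> : 1 %% k = 1 by rewrite modn_small.
case: ifP => /eqP h.
  have e := divn_eq n k. rewrite h in e. set m := n %/ k in e *.
  have -> : (2 * (n-1)) %/ k = 2 * m.
    by rewrite e addnK mulnA mulnK //; lia.
  nia.
have e := divn_eq (n-2) k. have := ltn_pmod (n-2) (ltnW hk). nia.
Qed.

Theorem lemma4 (k n : nat) (A : {set star n}) :
  2 <= k -> 2 * k <= n ->
  partial_star_design n k A ->
  #|A| < u n k ->
  leftover_has_kstar n k A.
Proof.
move=> hk hn _ hA.
have hu := @u_bound k n hk hn.
set C := [set s.1 | s in A].
have hC : #|C| <= #|A| by apply: leq_imset_card.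
have : 0 < #|~: C|.
  have := cardsC C; rewrite card_ord; lia.
case/card_gt0P => v; rewrite inE => vC.
set N := ~: (v |: C).
have hN : k <= #|N|.
  rewrite /N; have := cardsC (v |: C); rewrite card_ord cardsU1 vC /=.
  clearbody C N; move: hA hu hC; move: (u n k) #|A| #|C| #|~: (v |: C)| => a b c d. lia.
have [S [SN hS]] := @sub_card _ N k hN.
exists (v, S); split.
  rewrite /is_kstar /= hS eqxx andbT.
  apply/negP => /(subsetP SN); by rewrite !inE eqxx.
move=> e /imsetP [x /= xS ->].
have := subsetP SN x xS; rewrite !inE negb_or => /andP [xv xC].
rewrite /leftover_edge cards2 (eq_sym v x) xv /=.
apply/forallP => s; apply/implyP => sA; apply/negP => /imsetP [y yS eq].
have : s.1 \in [set v; x] by rewrite eq set21.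
have s1C : s.1 \in C by apply: imset_f.
rewrite !inE => /orP [/eqP e1 | /eqP e1].
  by move: vC; rewrite -e1 s1C.
by move: xC; rewrite -e1 s1C.
Qed.
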